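(* Let $h\ge2$ be an integer and $a,b,c,d\in\{1,\dots,h-1\}$ integers, and let $Q=\operatorname{conv}\{(a,0),(0,b),(h,h-c),(h-d,h)\}$. Then $\operatorname{ls}_\square(Q)=h$. Moreover, $Q$ is minimal if and only if $$\min\{a,b\}+\min\{c,d\}>h\quad\text{or}\quad \max\{a,c\}+\max\{b,d\}<h.$$ Furthermore, $Q$ cannot satisfy both of these inequalities, and if $Q$ satisfies one of them, then $Q$ is lattice-equivalent to a quadrilateral of the same form (with parameters in $\{1,\dots,h-1\}$) that satisfies the other.
   Context: A lattice polygon is a convex polygon (possibly degenerate) all of whose vertices lie in $\mathbb Z^2$. An affine unimodular transformation is $x\mapsto Ax+v$ with $A\in\mathbb Z^{2\times2}$, $\det A=\pm1$, $v\in\mathbb Z^2$; two sets are lattice-equivalent if one is the image of the other under such a map. With $\square=[0,1]^2$, $\operatorname{ls}_\square(P)$ is the smallest $l\ge0$ such that $\varphi(P)\subseteq l\square$ for some affine unimodular $\varphi$. A lattice polygon $P$ with $\operatorname{ls}_\square(P)=h$ is minimal if no lattice polygon properly contained in $P$ has $\operatorname{ls}_\square$ equal to $h$. *)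

(* Defs.v *)
From Stdlib Require Import Reals ZArith List.
Open Scope R_scope.

Definition pt := (R * R)%type.
Definition pset := pt -> Prop.

Definition lat (v : Z * Z) : pt := (IZR (fst v), IZR (snd v)).

Fixpoint rsum (f : nat -> R) (n : nat) : R :=
  match n with O => 0 | S k => rsum f k + f k end.

Definition conv (vs : list (Z * Z)) : pset := fun p =>
  exists w : nat -> R,
    (forall i, (i < length vs)%nat -> 0 <= w i) /\
    rsum w (length vs) = 1 /\
    fst p = rsum (fun i => w i * fst (lat (nth i vs (0%Z, 0%Z)))) (length vs) /\
    snd p = rsum (fun i => w i * snd (lat (nth i vs (0%Z, 0%Z)))) (length vs).

(* A lattice polygon: convex hull of a nonempty finite set of lattice points
   (possibly degenerate). *)
Definition lattice_polygon (P : pset) : Prop :=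
  exists vs : list (Z * Z), vs <> nil /\ (forall p, P p <-> conv vs p).

Record aff := Aff { m11 : Z; m12 : Z; m21 : Z; m22 : Z; t1 : Z; t2 : Z }.

Definition unimodular (f : aff) : Prop :=
  (m11 f * m22 f - m12 f * m21 f = 1)%Z \/ (m11 f * m22 f - m12 f * m21 f = -1)%Z.

Definition aff_apply (f : aff) (p : pt) : pt :=
  (IZR (m11 f) * fst p + IZR (m12 f) * snd p + IZR (t1 f),
   IZR (m21 f) * fst p + IZR (m22 f) * snd p + IZR (t2 f)).

Definition image (f : aff) (P : pset) : pset :=
  fun q => exists p, P p /\ q = aff_apply f p.

Definition subset (P P' : pset) : Prop := forall p, P p -> P' p.

Definition proper_subset (P P' : pset) : Prop :=
  subset P P' /\ exists p, P' p /\ ~ P p.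

Definition lsquare (l : R) : pset :=
  fun q => 0 <= fst q <= l /\ 0 <= snd q <= l.

Definition fits (P : pset) (l : R) : Prop :=
  exists f, unimodular f /\ subset (image f P) (lsquare l).

Definition is_ls (P : pset) (l : R) : Prop :=
  0 <= l /\ fits P l /\ forall l', 0 <= l' -> fits P l' -> l <= l'.

Definition minimal (P : pset) (h : R) : Prop :=
  is_ls P h /\
  forall P', lattice_polygon P' -> proper_subset P' P -> ~ is_ls P' h.

Definition lattice_equiv (P P' : pset) : Prop :=
  exists f, unimodular f /\ forall q, image f P q <-> P' q.

Definition quad (h a b c d : Z) : pset :=
  conv ((a, 0%Z) :: (0%Z, b) :: (h, (h - c)%Z) :: ((h - d)%Z, h) :: nil).

Definition in_range (h x : Z) : Prop := (1 <= x <= h - 1)%Z.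

Definition cond1 (h a b c d : Z) : Prop := (Z.min a b + Z.min c d > h)%Z.
Definition cond2 (h a b c d : Z) : Prop := (Z.max a c + Z.max b d < h)%Z.

(* Main.v *)
Require Import Defs.
From Stdlib Require Import Reals ZArith List Lra Lia Psatz ClassicalEpsilon.
Open Scope R_scope.

Lemma rsum_ext f g n : (forall i, (i < n)%nat -> f i = g i) -> rsum f n = rsum g n.
Proof. induction n; simpl; intros H; auto. rewrite IHn by (intros; apply H; lia). rewrite H by lia. auto. Qed.

Lemma rsum_plus f g n : rsum (fun i => f i + g i) n = rsum f n + rsum g n.
Proof. induction n; simpl; [lra|rewrite IHn; lra]. Qed.

Lemma rsum_scal c f n : rsum (fun i => c * f i) n = c * rsum f n.
Proof. induction n; simpl; [lra|rewrite IHn; lra]. Qed.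

Lemma rsum_le f g n : (forall i, (i < n)%nat -> f i <= g i) -> rsum f n <= rsum g n.
Proof. induction n; simpl; intros H; [lra|]. assert (f n <= g n) by (apply H; lia).
  assert (rsum f n <= rsum g n) by (apply IHn; intros; apply H; lia). lra. Qed.

Lemma rsum_nonneg f n : (forall i, (i < n)%nat -> 0 <= f i) -> 0 <= rsum f n.
Proof. intros H. replace 0 with (rsum (fun _ => 0) n). apply rsum_le; auto.
  clear H; induction n; simpl; auto; lra. Qed.

Lemma rsum_exchange (F : nat -> nat -> R) m n :
  rsum (fun j => rsum (fun i => F i j) n) m = rsum (fun i => rsum (fun j => F i j) m) n.
Proof. induction m; simpl.
  - clear. induction n; simpl; auto; lra.
  - rewrite IHm. rewrite <- rsum_plus. auto. Qed.

Lemma rsum_delta k n g : (k < n)%nat -> rsum (fun i => (if Nat.eqb i k then 1 else 0) * g i) n = g k.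
Proof. induction n; intros H; [lia|]. simpl. destruct (Nat.eqb n k) eqn:E.
  - apply Nat.eqb_eq in E; subst. replace (rsum _ k) with 0. lra.
    clear. assert (forall m, (m <= k)%nat -> 0 = rsum (fun i => (if Nat.eqb i k then 1 else 0) * g i) m).
    { induction m; simpl; intros; auto. destruct (Nat.eqb m k) eqn:E. apply Nat.eqb_eq in E; lia. rewrite <- IHm by lia. lra. }
    apply H; lia.
  - apply Nat.eqb_neq in E. rewrite IHn by lia. lra. Qed.

Definition X (vs : list (Z*Z)) i := IZR (fst (nth i vs (0%Z,0%Z))).
Definition Y (vs : list (Z*Z)) i := IZR (snd (nth i vs (0%Z,0%Z))).

Lemma conv_unfold vs p : conv vs p <-> exists w : nat -> R,
    (forall i, (i < length vs)%nat -> 0 <= w i) /\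
    rsum w (length vs) = 1 /\
    fst p = rsum (fun i => w i * X vs i) (length vs) /\
    snd p = rsum (fun i => w i * Y vs i) (length vs).
Proof. unfold conv, X, Y, lat; simpl. tauto. Qed.

Lemma conv_affine_eq vs p w al be ga :
  rsum w (length vs) = 1 ->
  fst p = rsum (fun i => w i * X vs i) (length vs) ->
  snd p = rsum (fun i => w i * Y vs i) (length vs) ->
  al * fst p + be * snd p + ga = rsum (fun i => w i * (al * X vs i + be * Y vs i + ga)) (length vs).
Proof. intros H1 H2 H3. rewrite H2, H3.
  rewrite (rsum_ext (fun i => w i * (al * X vs i + be * Y vs i + ga)) (fun i => (fun i => (fun i => al * (w i * X vs i)) i + (fun i => be * (w i * Y vs i)) i) i + (fun i => ga * w i) i)).
  2:{ intros; simpl; lra. }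
  rewrite !rsum_plus, !rsum_scal, H1. lra. Qed.

Lemma conv_affine_bound vs p al be ga lo hi :
  conv vs p ->
  (forall i, (i < length vs)%nat -> lo <= al * X vs i + be * Y vs i + ga <= hi) ->
  lo <= al * fst p + be * snd p + ga <= hi.
Proof. intros Hc Hb. apply conv_unfold in Hc. destruct Hc as [w [H0 [H1 [H2 H3]]]].
  rewrite (conv_affine_eq vs p w al be ga H1 H2 H3). split.
  - replace lo with (rsum (fun i => w i * lo) (length vs)).
    2:{ rewrite (rsum_ext _ (fun i => lo * w i)) by (intros; lra). rewrite rsum_scal, H1; lra. }
    apply rsum_le. intros i Hi. apply Rmult_le_compat_l; auto. apply Hb; auto.
  - replace hi with (rsum (fun i => w i * hi) (length vs)).
    2:{ rewrite (rsum_ext _ (fun i => hi * w i)) by (intros; lra). rewrite rsum_scal, H1; lra. }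
    apply rsum_le. intros i Hi. apply Rmult_le_compat_l; auto. apply Hb; auto. Qed.

Lemma conv_gen vs k : (k < length vs)%nat -> conv vs (lat (nth k vs (0%Z,0%Z))).
Proof. intros Hk. apply conv_unfold. exists (fun i => if Nat.eqb i k then 1 else 0). split; [|split;[|split]].
  - intros i _. destruct (Nat.eqb i k); lra.
  - rewrite (rsum_ext _ (fun i => (if Nat.eqb i k then 1 else 0) * (fun _ => 1) i)) by (intros; lra).
    apply rsum_delta; auto.
  - rewrite (rsum_delta k _ (X vs)); auto.
  - rewrite (rsum_delta k _ (Y vs)); auto. Qed.

Lemma conv_trans vs ws p :
  (forall i, (i < length vs)%nat -> conv ws (lat (nth i vs (0%Z,0%Z)))) -> conv vs p -> conv ws p.
Proof. intros H Hp.
  assert (H' : forall i, exists mu : nat -> R, (i < length vs)%nat ->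
     (forall j, (j < length ws)%nat -> 0 <= mu j) /\ rsum mu (length ws) = 1 /\
     X vs i = rsum (fun j => mu j * X ws j) (length ws) /\
     Y vs i = rsum (fun j => mu j * Y ws j) (length ws)).
  { intros i. destruct (lt_dec i (length vs)) as [Hi|Hi].
    - destruct (proj1 (conv_unfold _ _) (H i Hi)) as [mu Hmu]. exists mu. intros _. exact Hmu.
    - exists (fun _ => 0). intros; lia. }
  set (mu := fun i => proj1_sig (constructive_indefinite_description _ (H' i))).
  assert (Hmu : forall i, (i < length vs)%nat -> 
     (forall j, (j < length ws)%nat -> 0 <= mu i j) /\ rsum (mu i) (length ws) = 1 /\
     X vs i = rsum (fun j => mu i j * X ws j) (length ws) /\
     Y vs i = rsum (fun j => mu i j * Y ws j) (length ws)).
  { intros i Hi. unfold mu. destruct (constructive_indefinite_description _ (H' i)) as [m Hm]. simpl. auto. }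
  clearbody mu. apply conv_unfold in Hp. destruct Hp as [w [H0 [H1 [H2 H3]]]].
  apply conv_unfold. exists (fun j => rsum (fun i => w i * mu i j) (length vs)). split; [|split;[|split]].
  - intros j Hj. apply rsum_nonneg. intros i Hi. apply Rmult_le_pos; auto. apply Hmu; auto.
  - rewrite rsum_exchange. rewrite <- H1. apply rsum_ext. intros i Hi.
    rewrite rsum_scal. rewrite (proj1 (proj2 (Hmu i Hi))). lra.
  - rewrite H2. rewrite (rsum_ext (fun j => _ * X ws j) (fun j => rsum (fun i => w i * mu i j * X ws j) (length vs))).
    2:{ intros j _. rewrite (rsum_ext (fun i => w i * mu i j * X ws j) (fun i => X ws j * (w i * mu i j))) by (intros; lra). rewrite rsum_scal. lra. }
    rewrite rsum_exchange. apply rsum_ext. intros i Hi.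
    change (fst (lat (nth i vs (0%Z, 0%Z)))) with (X vs i). rewrite (proj1 (proj2 (proj2 (Hmu i Hi)))). rewrite <- rsum_scal. apply rsum_ext; intros; lra.
  - rewrite H3. rewrite (rsum_ext (fun j => _ * Y ws j) (fun j => rsum (fun i => w i * mu i j * Y ws j) (length vs))).
    2:{ intros j _. rewrite (rsum_ext (fun i => w i * mu i j * Y ws j) (fun i => Y ws j * (w i * mu i j))) by (intros; lra). rewrite rsum_scal. lra. }
    rewrite rsum_exchange. apply rsum_ext. intros i Hi.
    change (snd (lat (nth i vs (0%Z, 0%Z)))) with (Y vs i). rewrite (proj2 (proj2 (proj2 (Hmu i Hi)))). rewrite <- rsum_scal. apply rsum_ext; intros; lra.
Qed.

Lemma conv4_iff (x0 y0 x1 y1 x2 y2 x3 y3 : Z) p :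
  conv ((x0,y0)::(x1,y1)::(x2,y2)::(x3,y3)::nil) p <->
  exists w0 w1 w2 w3, 0 <= w0 /\ 0 <= w1 /\ 0 <= w2 /\ 0 <= w3 /\ w0 + w1 + w2 + w3 = 1 /\
    fst p = w0 * IZR x0 + w1 * IZR x1 + w2 * IZR x2 + w3 * IZR x3 /\
    snd p = w0 * IZR y0 + w1 * IZR y1 + w2 * IZR y2 + w3 * IZR y3.
Proof. unfold conv; simpl. split.
  - intros [w [H0 [H1 [H2 H3]]]]. exists (w 0%nat), (w 1%nat), (w 2%nat), (w 3%nat).
    repeat split; try (apply H0; lia); lra.
  - intros [w0 [w1 [w2 [w3 [H0 [H1 [H2 [H3 [H4 [H5 H6]]]]]]]]]].
    exists (fun i => match i with 0 => w0 | 1 => w1 | 2 => w2 | _ => w3 end)%nat.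
    simpl. repeat split; try lra. intros i Hi. destruct i as [|[|[|i]]]; auto. Qed.

Lemma quad_iff h a b c d p : quad h a b c d p <->
  exists w0 w1 w2 w3, 0 <= w0 /\ 0 <= w1 /\ 0 <= w2 /\ 0 <= w3 /\ w0 + w1 + w2 + w3 = 1 /\
    fst p = w0 * IZR a + w2 * IZR h + w3 * (IZR h - IZR d) /\
    snd p = w1 * IZR b + w2 * (IZR h - IZR c) + w3 * IZR h.
Proof. unfold quad. rewrite conv4_iff. rewrite !minus_IZR.
  split; intros [w0 [w1 [w2 [w3 H]]]]; exists w0, w1, w2, w3; lra. Qed.

Module ZL.
Open Scope Z_scope.
Lemma row_class h a b c d e p q :
 2 <= h -> 1 <= a <= h-1 -> 1 <= b <= h-1 -> 1 <= c <= h-1 -> 1 <= d <= h-1 -> 0 <= e <= 1 ->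
 p*h + q*(h-c-b) <= h-1 -> -(p*h + q*(h-c-b)) <= h-1 ->
 p*(h-d-a) + q*(h-e) <= h-1 -> -(p*(h-d-a) + q*(h-e)) <= h-1 ->
 (p = q \/ p = -q) \/ (e = 1 /\ p = 0 /\ (q = 1 \/ q = -1)).
Proof. intros Hh Ha Hb Hc Hd He H1 H2 H3 H4.
  assert (Hbc: -(h-2) <= h-c-b <= h-2) by lia.
  assert (Had: -(h-2) <= h-d-a <= h-2) by lia.
  set (u := h-c-b) in *. set (v := h-d-a) in *. clearbody u v.
  destruct (Z.lt_total (Z.abs p) (Z.abs q)) as [Hl|[Hl|Hl]].
  - destruct (Z.eq_dec e 1); [destruct (Z.eq_dec p 0)|].
    + right. subst. split; auto. split; auto. destruct (Z_le_gt_dec 0 q); nia.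
    + exfalso. destruct (Z_le_gt_dec 0 p), (Z_le_gt_dec 0 q); nia.
    + exfalso. assert (e = 0) by lia. subst. destruct (Z_le_gt_dec 0 p), (Z_le_gt_dec 0 q); nia.
  - left. lia.
  - exfalso. destruct (Z_le_gt_dec 0 p), (Z_le_gt_dec 0 q); nia.
Qed.

Lemma Zbasis e p1 q1 p2 q2 :
  (p1*q2 - q1*p2 = 1 \/ p1*q2 - q1*p2 = -1) ->
  ((p1 = q1 \/ p1 = -q1) \/ (e = 1 /\ p1 = 0 /\ (q1 = 1 \/ q1 = -1))) ->
  ((p2 = q2 \/ p2 = -q2) \/ (e = 1 /\ p2 = 0 /\ (q2 = 1 \/ q2 = -1))) ->
  e = 1 /\ (((p1 = 1 \/ p1 = -1) /\ (q1 = 1 \/ q1 = -1)) \/ ((p2 = 1 \/ p2 = -1) /\ (q2 = 1 \/ q2 = -1))).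
Proof. intros Hd [[H1|H1]|[He [H1 H1']]] [[H2|H2]|[He2 [H2 H2']]]; subst.
  all: try (exfalso; destruct Hd as [Hd|Hd]; ring_simplify in Hd; lia).
  all: try (exfalso; destruct Hd as [Hd|Hd]; ring_simplify in Hd; nia).
  all: split; auto.
  all: destruct Hd as [Hd|Hd]; ring_simplify in Hd; nia.
Qed.
End ZL.

Lemma fits_diff P l f z1 z2 : subset (image f P) (lsquare l) -> P (lat z1) -> P (lat z2) ->
  IZR (m11 f * (fst z1 - fst z2) + m12 f * (snd z1 - snd z2)) <= l /\
  IZR (m21 f * (fst z1 - fst z2) + m22 f * (snd z1 - snd z2)) <= l.
Proof. intros Hs H1 H2.
  destruct (Hs _ (ex_intro _ _ (conj H1 eq_refl))) as [[A1 A2] [A3 A4]].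
  destruct (Hs _ (ex_intro _ _ (conj H2 eq_refl))) as [[B1 B2] [B3 B4]].
  unfold aff_apply, lat in *; simpl in *. destruct z1 as [x1 y1], z2 as [x2 y2]; simpl in *.
  rewrite !plus_IZR, !mult_IZR, !minus_IZR. split; lra. Qed.

Lemma fits_diffZ P l f z1 z2 : subset (image f P) (lsquare l) -> P (lat z1) -> P (lat z2) ->
  forall h, l < IZR h ->
  (m11 f * (fst z1 - fst z2) + m12 f * (snd z1 - snd z2) <= h - 1 /\
  m21 f * (fst z1 - fst z2) + m22 f * (snd z1 - snd z2) <= h - 1)%Z.
Proof. intros Hs H1 H2 h Hl. destruct (fits_diff P l f z1 z2 Hs H1 H2) as [A B].
  split; apply Z.lt_le_pred; apply lt_IZR; lra. Qed.

Lemma config_lb h a b c d e (P : pset) l :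
 (2 <= h)%Z -> in_range h a -> in_range h b -> in_range h c -> in_range h d -> (0 <= e <= 1)%Z ->
 P (lat (a,0%Z)) -> P (lat (0%Z,b)) -> P (lat (h,h-c)%Z) -> P (lat (h-d,h-e)%Z) ->
 (e = 1%Z -> (exists z1 z2, P (lat z1) /\ P (lat z2) /\ (fst z1 + snd z1 - (fst z2 + snd z2) >= h)%Z) /\
             (exists z3 z4, P (lat z3) /\ P (lat z4) /\ (fst z3 - snd z3 - (fst z4 - snd z4) >= h)%Z)) ->
 fits P l -> IZR h <= l.
Proof. unfold in_range. intros Hh Ha Hb Hc Hd He HA HB HC HT Hw [f [Hu Hs]].
  destruct (Rle_or_lt (IZR h) l) as [Hl|Hl]; auto; exfalso.
  destruct (fits_diffZ P l f _ _ Hs HC HB h Hl) as [R1 R2].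
  destruct (fits_diffZ P l f _ _ Hs HB HC h Hl) as [R3 R4].
  destruct (fits_diffZ P l f _ _ Hs HT HA h Hl) as [R5 R6].
  destruct (fits_diffZ P l f _ _ Hs HA HT h Hl) as [R7 R8].
  simpl in *.
  assert (K1 := ZL.row_class h a b c d e (m11 f) (m12 f) Hh Ha Hb Hc Hd He ltac:(lia) ltac:(lia) ltac:(lia) ltac:(lia)).
  assert (K2 := ZL.row_class h a b c d e (m21 f) (m22 f) Hh Ha Hb Hc Hd He ltac:(lia) ltac:(lia) ltac:(lia) ltac:(lia)).
  unfold unimodular in Hu.
  destruct (ZL.Zbasis e _ _ _ _ Hu K1 K2) as [He1 Hrow].
  destruct (Hw He1) as [[z1 [z2 [H1 [H2 H12]]]] [z3 [z4 [H3 [H4 H34]]]]].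
  destruct (fits_diffZ P l f _ _ Hs H1 H2 h Hl) as [S1 S2].
  destruct (fits_diffZ P l f _ _ Hs H2 H1 h Hl) as [S3 S4].
  destruct (fits_diffZ P l f _ _ Hs H3 H4 h Hl) as [S5 S6].
  destruct (fits_diffZ P l f _ _ Hs H4 H3 h Hl) as [S7 S8].
  destruct Hrow as [[[E1|E1] [E2|E2]]|[[E1|E1] [E2|E2]]]; rewrite E1, E2 in *; lia.
Qed.

Lemma convZ_bound vs p (al be ga lo hi : Z) : conv vs p ->
  (forall i, (i < length vs)%nat -> (lo <= al * fst (nth i vs (0%Z,0%Z)) + be * snd (nth i vs (0%Z,0%Z)) + ga <= hi)%Z) ->
  IZR lo <= IZR al * fst p + IZR be * snd p + IZR ga <= IZR hi.
Proof. intros Hc Hb. apply (conv_affine_bound vs); auto. intros i Hi. unfold X, Y.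
  destruct (Hb i Hi) as [H1 H2]. apply IZR_le in H1. apply IZR_le in H2.
  rewrite !plus_IZR, !mult_IZR in H1, H2. lra. Qed.

Definition qlist h a b c d : list (Z*Z) := ((a, 0%Z) :: (0%Z, b) :: (h, (h - c)%Z) :: ((h - d)%Z, h) :: nil).

Lemma quad_boundZ h a b c d (al be ga lo hi : Z) p : quad h a b c d p ->
  (lo <= al * a + ga <= hi)%Z -> (lo <= be * b + ga <= hi)%Z ->
  (lo <= al * h + be * (h - c) + ga <= hi)%Z -> (lo <= al * (h-d) + be * h + ga <= hi)%Z ->
  IZR lo <= IZR al * fst p + IZR be * snd p + IZR ga <= IZR hi.
Proof. intros Hq H1 H2 H3 H4. apply (convZ_bound (qlist h a b c d)); auto.
  intros i Hi. simpl in Hi. destruct i as [|[|[|[|i]]]]; simpl; try lia. Qed.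

Lemma quad_vertex h a b c d : quad h a b c d (lat (a,0%Z)) /\ quad h a b c d (lat (0%Z,b)) /\
  quad h a b c d (lat (h,h-c)%Z) /\ quad h a b c d (lat (h-d,h)%Z).
Proof. unfold quad. repeat split.
  - apply (conv_gen (qlist h a b c d) 0); simpl; lia.
  - apply (conv_gen (qlist h a b c d) 1); simpl; lia.
  - apply (conv_gen (qlist h a b c d) 2); simpl; lia.
  - apply (conv_gen (qlist h a b c d) 3); simpl; lia. Qed.

Definition idaff := Aff 1 0 0 1 0 0.

Lemma quad_fits h a b c d : (2 <= h)%Z -> in_range h a -> in_range h b -> in_range h c -> in_range h d ->
  fits (quad h a b c d) (IZR h).
Proof. unfold in_range. intros. exists idaff. split. left; reflexivity.
  intros q [p [Hp ->]]. unfold aff_apply, idaff, lsquare; simpl. split.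
  - pose proof (quad_boundZ h a b c d 1 0 0 0 h p Hp ltac:(lia) ltac:(lia) ltac:(lia) ltac:(lia)). lra.
  - pose proof (quad_boundZ h a b c d 0 1 0 0 h p Hp ltac:(lia) ltac:(lia) ltac:(lia) ltac:(lia)). lra.
Qed.

Lemma quad_ls h a b c d : (2 <= h)%Z -> in_range h a -> in_range h b -> in_range h c -> in_range h d ->
  is_ls (quad h a b c d) (IZR h).
Proof. intros. split; [apply IZR_le; lia|]. split; [apply quad_fits; auto|].
  intros l' _ Hf. destruct (quad_vertex h a b c d) as [V1 [V2 [V3 V4]]].
  apply (config_lb h a b c d 0%Z (quad h a b c d) l'); auto; try lia.
  replace (h - 0)%Z with h by lia. auto. Qed.

Definition sR h := Aff (-1) 0 0 1 h 0.
Definition sS := Aff 0 1 1 0 0 0.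
Definition sA h := Aff 0 (-1) (-1) 0 h h.
Definition sT h := Aff (-1) 0 0 (-1) h h.

Ltac maps_tac W0 W1 W2 W3 :=
  intros Hq; rewrite quad_iff in *; destruct Hq as [w0 [w1 [w2 [w3 [H0 [H1 [H2 [H3 [H4 [H5 H6]]]]]]]]]];
  exists W0, W1, W2, W3; unfold aff_apply; simpl; rewrite ?minus_IZR;
  replace w3 with (1 - w0 - w1 - w2) in * by lra;
  repeat split; try lra; try (rewrite H5, H6; ring).

Lemma maps_sR h a b c d p : quad h a b c d p -> quad h (h-a) (h-c) (h-b) (h-d) (aff_apply (sR h) p).
Proof. maps_tac w0 w2 w1 w3. Qed.
Lemma maps_sS h a b c d p : quad h a b c d p -> quad h b a d c (aff_apply sS p).
Proof. maps_tac w1 w0 w3 w2. Qed.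
Lemma maps_sA h a b c d p : quad h a b c d p -> quad h c d a b (aff_apply (sA h) p).
Proof. maps_tac w2 w3 w0 w1. Qed.
Lemma maps_sT h a b c d p : quad h a b c d p -> quad h d c b a (aff_apply (sT h) p).
Proof. maps_tac w3 w2 w1 w0. Qed.

Lemma invol_sR h p : aff_apply (sR h) (aff_apply (sR h) p) = p.
Proof. destruct p; unfold aff_apply; simpl; f_equal; ring. Qed.
Lemma invol_sS p : aff_apply sS (aff_apply sS p) = p.
Proof. destruct p; unfold aff_apply; simpl; f_equal; ring. Qed.
Lemma invol_sA h p : aff_apply (sA h) (aff_apply (sA h) p) = p.
Proof. destruct p; unfold aff_apply; simpl; f_equal; ring. Qed.
Lemma invol_sT h p : aff_apply (sT h) (aff_apply (sT h) p) = p.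
Proof. destruct p; unfold aff_apply; simpl; f_equal; ring. Qed.

Lemma equiv_sR h a b c d : lattice_equiv (quad h a b c d) (quad h (h-a) (h-c) (h-b) (h-d)).
Proof. exists (sR h). split. right; reflexivity. intros q; split.
  - intros [p [Hp ->]]. apply maps_sR; auto.
  - intros Hq. exists (aff_apply (sR h) q). split; [|rewrite invol_sR; auto].
    pose proof (maps_sR _ _ _ _ _ _ Hq) as H.
    replace (h - (h - a))%Z with a in H by lia. replace (h - (h - b))%Z with b in H by lia.
    replace (h - (h - c))%Z with c in H by lia. replace (h - (h - d))%Z with d in H by lia. auto. Qed.

Lemma lat_eq z x y : IZR (fst z) = IZR x -> IZR (snd z) = IZR y -> lat z = lat (x,y).
Proof. intros H1 H2. apply eq_IZR in H1. apply eq_IZR in H2. destruct z; simpl in *; subst; auto. Qed.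

Ltac vtac :=
  let H := fresh in
  unfold in_range; intros Hh Ha Hb Hc Hd Hq Hne;
  match goal with |- (?l <= ?r)%Z => destruct (Z_le_gt_dec l r) as [H|H]; auto; exfalso; apply Hne end;
  rewrite quad_iff in Hq; destruct Hq as [w0 [w1 [w2 [w3 [H0 [H1 [H2 [H3 [H4 [H5 H6]]]]]]]]]];
  unfold lat in H5, H6; simpl in H5, H6.

Lemma v_x0 h a b c d z : (2 <= h)%Z -> in_range h a -> in_range h b -> in_range h c -> in_range h d ->
  quad h a b c d (lat z) -> lat z <> lat (0%Z,b) -> (1 <= fst z)%Z.
Proof. vtac.
  assert (IZR (fst z) <= 0) by (apply IZR_le; lia).
  assert (1 <= IZR a) by (apply IZR_le; lia). assert (IZR h - IZR d >= 1) by (rewrite <- minus_IZR; apply Rle_ge, IZR_le; lia).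
  assert (2 <= IZR h) by (apply IZR_le; lia).
  assert (w0 = 0) by nra. assert (w2 = 0) by nra. assert (w3 = 0) by nra. subst.
  apply lat_eq; [rewrite H5|rewrite H6]; simpl; nra. Qed.

Lemma v_xh h a b c d z : (2 <= h)%Z -> in_range h a -> in_range h b -> in_range h c -> in_range h d ->
  quad h a b c d (lat z) -> lat z <> lat (h,h-c)%Z -> (fst z <= h - 1)%Z.
Proof. vtac.
  assert (IZR (fst z) >= IZR h) by (apply Rle_ge, IZR_le; lia).
  assert (IZR a <= IZR h - 1) by (rewrite <- minus_IZR; apply IZR_le; lia). assert (IZR d >= 1) by (apply Rle_ge, IZR_le; lia).
  assert (2 <= IZR h) by (apply IZR_le; lia).
  assert (w0 = 0) by nra. assert (w3 = 0) by nra. assert (w1 = 0) by nra. subst.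
  apply lat_eq; [rewrite H5|rewrite H6]; simpl; rewrite ?minus_IZR; nra. Qed.

Lemma v_y0 h a b c d z : (2 <= h)%Z -> in_range h a -> in_range h b -> in_range h c -> in_range h d ->
  quad h a b c d (lat z) -> lat z <> lat (a,0%Z) -> (1 <= snd z)%Z.
Proof. vtac.
  assert (IZR (snd z) <= 0) by (apply IZR_le; lia).
  assert (1 <= IZR b) by (apply IZR_le; lia). assert (IZR h - IZR c >= 1) by (rewrite <- minus_IZR; apply Rle_ge, IZR_le; lia).
  assert (2 <= IZR h) by (apply IZR_le; lia).
  assert (w1 = 0) by nra. assert (w2 = 0) by nra. assert (w3 = 0) by nra. subst.
  apply lat_eq; [rewrite H5|rewrite H6]; simpl; nra. Qed.

Lemma v_yh h a b c d z : (2 <= h)%Z -> in_range h a -> in_range h b -> in_range h c -> in_range h d ->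
  quad h a b c d (lat z) -> lat z <> lat (h-d,h)%Z -> (snd z <= h - 1)%Z.
Proof. vtac.
  assert (IZR (snd z) >= IZR h) by (apply Rle_ge, IZR_le; lia).
  assert (IZR b <= IZR h - 1) by (rewrite <- minus_IZR; apply IZR_le; lia). assert (IZR c >= 1) by (apply Rle_ge, IZR_le; lia).
  assert (2 <= IZR h) by (apply IZR_le; lia).
  assert (w0 = 0) by nra. assert (w1 = 0) by nra. assert (w2 = 0) by nra. subst.
  apply lat_eq; [rewrite H5|rewrite H6]; simpl; rewrite ?minus_IZR; nra. Qed.

Lemma qbZ h a b c d z : quad h a b c d (lat z) -> (0 <= h)%Z -> (1 <= a)%Z -> (1 <= b)%Z ->
  (a <= h)%Z -> (b <= h)%Z -> (c <= h)%Z -> (d <= h)%Z -> (0 <= c)%Z -> (0 <= d)%Z ->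
  (0 <= fst z <= h /\ 0 <= snd z <= h /\ Z.min a b <= fst z + snd z <= 2*h - Z.min c d /\
   - Z.max b d <= fst z - snd z <= Z.max a c)%Z.
Proof. intros Hq E1 E2 E3 E4 E5 E6 E7 E8 E9.
  assert (K: forall al be lo hi, (lo <= al * a <= hi)%Z -> (lo <= be * b <= hi)%Z ->
    (lo <= al * h + be * (h - c) <= hi)%Z -> (lo <= al * (h-d) + be * h <= hi)%Z ->
    (lo <= al * fst z + be * snd z <= hi)%Z).
  { intros al be lo hi H1 H2 H3 H4.
    pose proof (quad_boundZ h a b c d al be 0 lo hi (lat z) Hq ltac:(lia) ltac:(lia) ltac:(lia) ltac:(lia)) as [A B].
    unfold lat in A, B; simpl in A, B. rewrite <- !mult_IZR, <- !plus_IZR in A, B.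
    apply le_IZR in A. apply le_IZR in B. lia. }
  pose proof (K 1%Z 0%Z 0%Z h ltac:(lia) ltac:(lia) ltac:(lia) ltac:(lia)).
  pose proof (K 0%Z 1%Z 0%Z h ltac:(lia) ltac:(lia) ltac:(lia) ltac:(lia)).
  pose proof (K 1%Z 1%Z (Z.min a b) (2*h - Z.min c d)%Z ltac:(lia) ltac:(lia) ltac:(lia) ltac:(lia)).
  pose proof (K 1%Z (-1)%Z (- Z.max b d)%Z (Z.max a c) ltac:(lia) ltac:(lia) ltac:(lia) ltac:(lia)).
  lia. Qed.

Lemma fitsZ vs f (L : Z) P : unimodular f ->
  (forall i, (i < length vs)%nat ->
     (0 <= m11 f * fst (nth i vs (0%Z,0%Z)) + m12 f * snd (nth i vs (0%Z,0%Z)) + t1 f <= L)%Z /\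
     (0 <= m21 f * fst (nth i vs (0%Z,0%Z)) + m22 f * snd (nth i vs (0%Z,0%Z)) + t2 f <= L)%Z) ->
  (forall p, P p <-> conv vs p) -> fits P (IZR L).
Proof. intros Hu Hb HP. exists f. split; auto. intros q [p [Hp ->]]. apply HP in Hp.
  unfold lsquare, aff_apply; simpl. split.
  - apply (convZ_bound vs p (m11 f) (m12 f) (t1 f) 0 L Hp). intros; apply Hb; auto.
  - apply (convZ_bound vs p (m21 f) (m22 f) (t2 f) 0 L Hp). intros; apply Hb; auto. Qed.

Lemma cond_min h a b c d : (2 <= h)%Z -> in_range h a -> in_range h b -> in_range h c -> in_range h d ->
  cond1 h a b c d \/ cond2 h a b c d -> minimal (quad h a b c d) (IZR h).
Proof. intros Hh Ha Hb Hc Hd Hcond. split; [apply quad_ls; auto|].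
  intros P' [vs [Hne HP]] [Hsub [p0 [Hp0 Hp0n]]] Hls.
  assert (Hgen : forall i, (i < length vs)%nat -> P' (lat (nth i vs (0%Z,0%Z)))).
  { intros i Hi. apply HP. apply conv_gen; auto. }
  destruct (quad_vertex h a b c d) as [V1 [V2 [V3 V4]]].
  assert (Hmiss : ~ P' (lat (a,0%Z)) \/ ~ P' (lat (0%Z,b)) \/ ~ P' (lat (h,h-c)%Z) \/ ~ P' (lat (h-d,h)%Z)).
  { destruct (Classical_Prop.classic (P' (lat (a,0%Z)))) as [W1|W1]; auto.
    destruct (Classical_Prop.classic (P' (lat (0%Z,b)))) as [W2|W2]; auto.
    destruct (Classical_Prop.classic (P' (lat (h,h-c)%Z))) as [W3|W3]; auto.
    destruct (Classical_Prop.classic (P' (lat (h-d,h)%Z))) as [W4|W4]; auto.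
    exfalso. apply Hp0n. apply HP. apply (conv_trans (qlist h a b c d)); auto.
    intros i Hi. simpl in Hi. apply HP. destruct i as [|[|[|[|i]]]]; simpl; auto; lia. }
  assert (HQ : forall i, (i < length vs)%nat -> quad h a b c d (lat (nth i vs (0%Z,0%Z)))).
  { intros i Hi. apply Hsub. auto. }
  assert (Hne' : forall v, ~ P' (lat v) -> forall i, (i < length vs)%nat -> lat (nth i vs (0%Z,0%Z)) <> lat v).
  { intros v Hv i Hi E. apply Hv. rewrite <- E. auto. }
  unfold in_range in *.
  assert (HB : forall i, (i < length vs)%nat -> let z := nth i vs (0%Z,0%Z) in
    (0 <= fst z <= h /\ 0 <= snd z <= h /\ Z.min a b <= fst z + snd z <= 2*h - Z.min c d /\
   - Z.max b d <= fst z - snd z <= Z.max a c)%Z).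
  { intros i Hi. apply qbZ; try lia. auto. }
  assert (Hfalse : fits P' (IZR (h-1)) -> False).
  { intros F. destruct Hls as [_ [_ Hmin]]. specialize (Hmin _ (IZR_le 0 (h-1) ltac:(lia)) F).
    apply le_IZR in Hmin. lia. }
  apply Hfalse. unfold cond1, cond2 in Hcond.
  destruct Hmiss as [M|[M|[M|M]]].
  - pose proof (fun i Hi => v_y0 h a b c d _ Hh Ha Hb Hc Hd (HQ i Hi) (Hne' _ M i Hi)) as S.
    destruct Hcond as [Hc1|Hc2].
    + apply (fitsZ vs (Aff 1 1 0 1 (- Z.min a b) (-1)) (h-1) P'); [left; reflexivity| |auto].
      intros i Hi. specialize (S i Hi). specialize (HB i Hi). cbv zeta in HB; cbn [m11 m12 m21 m22 t1 t2]. lia.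
    + apply (fitsZ vs (Aff 1 (-1) 0 1 (Z.max b d) (-1)) (h-1) P'); [left; reflexivity| |auto].
      intros i Hi. specialize (S i Hi). specialize (HB i Hi). cbv zeta in HB; cbn [m11 m12 m21 m22 t1 t2]. lia.
  - pose proof (fun i Hi => v_x0 h a b c d _ Hh Ha Hb Hc Hd (HQ i Hi) (Hne' _ M i Hi)) as S.
    destruct Hcond as [Hc1|Hc2].
    + apply (fitsZ vs (Aff 1 0 1 1 (-1) (- Z.min a b)) (h-1) P'); [left; reflexivity| |auto].
      intros i Hi. specialize (S i Hi). specialize (HB i Hi). cbv zeta in HB; cbn [m11 m12 m21 m22 t1 t2]. lia.
    + apply (fitsZ vs (Aff 1 0 1 (-1) (-1) (Z.max b d)) (h-1) P'); [right; reflexivity| |auto].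
      intros i Hi. specialize (S i Hi). specialize (HB i Hi). cbv zeta in HB; cbn [m11 m12 m21 m22 t1 t2]. lia.
  - pose proof (fun i Hi => v_xh h a b c d _ Hh Ha Hb Hc Hd (HQ i Hi) (Hne' _ M i Hi)) as S.
    destruct Hcond as [Hc1|Hc2].
    + apply (fitsZ vs (Aff 1 0 1 1 0 (- Z.min a b)) (h-1) P'); [left; reflexivity| |auto].
      intros i Hi. specialize (S i Hi). specialize (HB i Hi). cbv zeta in HB; cbn [m11 m12 m21 m22 t1 t2]. lia.
    + apply (fitsZ vs (Aff 1 0 1 (-1) 0 (Z.max b d)) (h-1) P'); [right; reflexivity| |auto].
      intros i Hi. specialize (S i Hi). specialize (HB i Hi). cbv zeta in HB; cbn [m11 m12 m21 m22 t1 t2]. lia.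
  - pose proof (fun i Hi => v_yh h a b c d _ Hh Ha Hb Hc Hd (HQ i Hi) (Hne' _ M i Hi)) as S.
    destruct Hcond as [Hc1|Hc2].
    + apply (fitsZ vs (Aff 1 1 0 1 (- Z.min a b) 0) (h-1) P'); [left; reflexivity| |auto].
      intros i Hi. specialize (S i Hi). specialize (HB i Hi). cbv zeta in HB; cbn [m11 m12 m21 m22 t1 t2]. lia.
    + apply (fitsZ vs (Aff 1 (-1) 0 1 (Z.max b d) 0) (h-1) P'); [left; reflexivity| |auto].
      intros i Hi. specialize (S i Hi). specialize (HB i Hi). cbv zeta in HB; cbn [m11 m12 m21 m22 t1 t2]. lia.
Qed.

Definition good h a b c d := ~(((d < c)%Z /\ (Z.min a b + d = h)%Z) \/ ((b < d)%Z /\ (Z.max a c + d = h)%Z)).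
Definition L0 h a b c d : list (Z*Z) := ((a, 0%Z) :: (0%Z, b) :: (h, (h - c)%Z) :: ((h - d)%Z, (h-1)%Z) :: nil).

Lemma top_lb h a b c d P l : (2 <= h)%Z -> in_range h a -> in_range h b -> in_range h c -> in_range h d ->
  ~ cond1 h a b c d -> ~ cond2 h a b c d -> good h a b c d ->
  (forall i, (i < 4)%nat -> P (lat (nth i (L0 h a b c d) (0%Z,0%Z)))) -> fits P l -> IZR h <= l.
Proof. intros Hh Ha Hb Hc Hd N1 N2 G HP Hf.
  pose proof (HP 0%nat ltac:(lia)) as PA. pose proof (HP 1%nat ltac:(lia)) as PB.
  pose proof (HP 2%nat ltac:(lia)) as PC. pose proof (HP 3%nat ltac:(lia)) as PT. simpl in PA, PB, PC, PT.
  apply (config_lb h a b c d 1%Z P l); auto; try lia.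
  unfold cond1, cond2, good, in_range in *. intros _. split.
  - destruct (Z_le_gt_dec a b) as [Hab|Hab].
    + destruct (Z_le_gt_dec c d) as [Hcd|Hcd].
      * exists (h, h-c)%Z, (a,0%Z). repeat split; auto. simpl. lia.
      * exists (h-d, h-1)%Z, (a,0%Z). repeat split; auto. simpl. lia.
    + destruct (Z_le_gt_dec c d) as [Hcd|Hcd].
      * exists (h, h-c)%Z, (0%Z,b). repeat split; auto. simpl. lia.
      * exists (h-d, h-1)%Z, (0%Z,b). repeat split; auto. simpl. lia.
  - destruct (Z_le_gt_dec c a) as [Hab|Hab].
    + destruct (Z_le_gt_dec d b) as [Hcd|Hcd].
      * exists (a,0%Z), (0%Z,b). repeat split; auto. simpl. lia.
      * exists (a,0%Z), (h-d, h-1)%Z. repeat split; auto. simpl. lia.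
    + destruct (Z_le_gt_dec d b) as [Hcd|Hcd].
      * exists (h, h-c)%Z, (0%Z,b). repeat split; auto. simpl. lia.
      * exists (h, h-c)%Z, (h-d, h-1)%Z. repeat split; auto. simpl. lia.
Qed.

Lemma T1_in h a b c d : (2 <= h)%Z -> in_range h a -> in_range h b -> in_range h c -> in_range h d ->
  quad h a b c d (lat (h-d, h-1)%Z).
Proof. unfold in_range; intros Hh Ha Hb Hc Hd. rewrite quad_iff. unfold lat; cbn [fst snd].
  assert (HDT : (0 <= h*(h-1-b) - (h-c-b)*(h-d))%Z) by nia.
  apply IZR_le in HDT. assert (0 <= IZR d) by (apply IZR_le; lia). assert (0 <= IZR (h-d)) by (apply IZR_le; lia).
  assert (2 <= IZR h) by (apply IZR_le; lia).
  rewrite ?minus_IZR, ?mult_IZR, ?minus_IZR in *. rewrite ?minus_IZR. change (IZR 1) with 1 in *.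
  set (DT := IZR h * (IZR h - 1 - IZR b) - (IZR h - IZR c - IZR b) * (IZR h - IZR d)) in *.
  set (Di := / (IZR h + DT)).
  assert (HDi : (IZR h + DT) * Di = 1) by (unfold Di; field; lra).
  assert (0 <= Di) by (unfold Di; left; apply Rinv_0_lt_compat; lra).
  exists 0, (IZR d * Di), ((IZR h - IZR d) * Di), (DT * Di).
  repeat split; try lra; try (apply Rmult_le_pos; lra).
  - transitivity ((IZR h - IZR d) * ((IZR h + DT) * Di)); [rewrite HDi; ring|unfold DT; ring].
  - transitivity ((IZR h - 1) * ((IZR h + DT) * Di)); [rewrite HDi; ring|unfold DT; ring].
Qed.

Definition affZ (f : aff) (z : Z*Z) : Z*Z :=
  (m11 f * fst z + m12 f * snd z + t1 f, m21 f * fst z + m22 f * snd z + t2 f)%Z.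

Lemma lat_affZ f z : lat (affZ f z) = aff_apply f (lat z).
Proof. unfold lat, affZ, aff_apply; simpl. rewrite !plus_IZR, !mult_IZR. auto. Qed.

Lemma nth_map_lt (f : Z*Z -> Z*Z) l i : (i < length l)%nat -> nth i (map f l) (0%Z,0%Z) = f (nth i l (0%Z,0%Z)).
Proof. intros Hi. rewrite (nth_indep _ _ (f (0%Z,0%Z))) by (rewrite length_map; auto). apply map_nth. Qed.

Definition comp (f g : aff) : aff :=
  Aff (m11 f * m11 g + m12 f * m21 g) (m11 f * m12 g + m12 f * m22 g)
      (m21 f * m11 g + m22 f * m21 g) (m21 f * m12 g + m22 f * m22 g)
      (m11 f * t1 g + m12 f * t2 g + t1 f) (m21 f * t1 g + m22 f * t2 g + t2 f).

Lemma comp_apply f g p : aff_apply (comp f g) p = aff_apply f (aff_apply g p).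
Proof. destruct p; unfold aff_apply, comp; simpl. rewrite !plus_IZR, !mult_IZR. f_equal; ring. Qed.

Lemma comp_unimod f g : unimodular f -> unimodular g -> unimodular (comp f g).
Proof. unfold unimodular, comp; simpl. intros Hf Hg.
  assert (E : ((m11 f * m11 g + m12 f * m21 g) * (m21 f * m12 g + m22 f * m22 g) -
    (m11 f * m12 g + m12 f * m22 g) * (m21 f * m11 g + m22 f * m21 g) =
    (m11 f * m22 f - m12 f * m21 f) * (m11 g * m22 g - m12 g * m21 g))%Z) by ring.
  rewrite E. destruct Hf as [-> | ->], Hg as [-> | ->]; [left|right|right|left]; reflexivity. Qed.

Lemma notmin_gen h a b c d a' b' c' d' s :
  (2 <= h)%Z -> in_range h a' -> in_range h b' -> in_range h c' -> in_range h d' ->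
  in_range h a -> in_range h b -> in_range h c -> in_range h d ->
  unimodular s -> (forall p, aff_apply s (aff_apply s p) = p) ->
  (forall p, quad h a' b' c' d' p -> quad h a b c d (aff_apply s p)) ->
  ~ cond1 h a' b' c' d' -> ~ cond2 h a' b' c' d' -> good h a' b' c' d' ->
  ~ minimal (quad h a b c d) (IZR h).
Proof. intros Hh Ha' Hb' Hc' Hd' Ha Hb Hc Hd Hs Hinv Hmap N1 N2 G [_ Hmin].
  set (L := map (affZ s) (L0 h a' b' c' d')).
  assert (HL : length L = 4%nat) by reflexivity.
  assert (Hn : forall i, (i < 4)%nat -> lat (nth i L (0%Z,0%Z)) = aff_apply s (lat (nth i (L0 h a' b' c' d') (0%Z,0%Z)))).
  { intros i Hi. unfold L. rewrite nth_map_lt by (simpl; lia). apply lat_affZ. }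
  assert (HQ' : forall i, (i < 4)%nat -> quad h a' b' c' d' (lat (nth i (L0 h a' b' c' d') (0%Z,0%Z)))).
  { intros i Hi. destruct (quad_vertex h a' b' c' d') as [V1 [V2 [V3 V4]]].
    destruct i as [|[|[|[|i]]]]; simpl; auto; try lia. apply T1_in; auto. }
  assert (Hsub : subset (conv L) (quad h a b c d)).
  { intros p Hp. apply (conv_trans L (qlist h a b c d)); auto.
    intros i Hi. change (i < length L)%nat in Hi; rewrite HL in Hi. rewrite Hn by auto. apply Hmap. auto. }
  apply (Hmin (conv L)).
  - exists L. split; [discriminate|]. tauto.
  - split; auto. destruct (quad_vertex h a' b' c' d') as [V1 [V2 [V3 V4]]].
    exists (aff_apply s (lat (h-d', h)%Z)). split; [apply Hmap; auto|].
    intros Hc0.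
    pose proof (conv_affine_bound L _ (IZR (m21 s)) (IZR (m22 s)) (IZR (t2 s)) 0 (IZR h - 1) Hc0) as K.
    assert (E : forall p, IZR (m21 s) * fst p + IZR (m22 s) * snd p + IZR (t2 s) = snd (aff_apply s p)).
    { intros p; unfold aff_apply; simpl; ring. }
    rewrite E, Hinv in K. unfold lat in K; simpl in K.
    assert (IZR h <= IZR h - 1); [|lra]. apply K.
    intros i Hi. change (i < length L)%nat in Hi; rewrite HL in Hi. unfold X, Y.
    change (IZR (fst (nth i L (0%Z,0%Z)))) with (fst (lat (nth i L (0%Z,0%Z)))).
    change (IZR (snd (nth i L (0%Z,0%Z)))) with (snd (lat (nth i L (0%Z,0%Z)))).
    rewrite E, Hn, Hinv by auto. unfold in_range in *.
    destruct i as [|[|[|[|i]]]]; simpl; try lia; split; try (apply IZR_le; lia);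
      rewrite <- ?minus_IZR; change 1 with (IZR 1); rewrite <- ?minus_IZR; apply IZR_le; lia.
  - split; [apply IZR_le; lia|]. split.
    + destruct (quad_fits h a b c d Hh Ha Hb Hc Hd) as [f [Hu Hf]]. exists f. split; auto.
      intros q [p [Hp ->]]. apply Hf. exists p. split; auto.
    + intros l' _ [f [Hu Hf]].
      apply (top_lb h a' b' c' d' (fun p => conv L (aff_apply s p)) l'); auto.
      * intros i Hi. rewrite <- Hn by auto. apply conv_gen. lia.
      * exists (comp f s). split; [apply comp_unimod; auto|].
        intros q [p [Hp ->]]. rewrite comp_apply. apply Hf. exists (aff_apply s p). auto.
Qed.

Lemma choose_opt h a b c d : in_range h a -> in_range h b -> in_range h c -> in_range h d ->
  ~ cond1 h a b c d -> ~ cond2 h a b c d ->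
  good h a b c d \/ good h b a d c \/ good h c d a b \/ good h d c b a.
Proof. unfold in_range, cond1, cond2, good. intros. lia. Qed.

Lemma id_apply p : aff_apply idaff p = p.
Proof. destruct p; unfold aff_apply, idaff; simpl. f_equal; ring. Qed.

Lemma neither_notmin h a b c d : (2 <= h)%Z -> in_range h a -> in_range h b -> in_range h c -> in_range h d ->
  ~ cond1 h a b c d -> ~ cond2 h a b c d -> ~ minimal (quad h a b c d) (IZR h).
Proof. intros Hh Ha Hb Hc Hd N1 N2.
  assert (M1 : ~ cond1 h b a d c /\ ~ cond2 h b a d c) by (unfold in_range, cond1, cond2 in *; lia).
  assert (M2 : ~ cond1 h c d a b /\ ~ cond2 h c d a b) by (unfold in_range, cond1, cond2 in *; lia).
  assert (M3 : ~ cond1 h d c b a /\ ~ cond2 h d c b a) by (unfold in_range, cond1, cond2 in *; lia).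
  destruct (choose_opt h a b c d Ha Hb Hc Hd N1 N2) as [G|[G|[G|G]]].
  - apply (notmin_gen h a b c d a b c d idaff); auto. left; reflexivity.
    intros; rewrite !id_apply; auto. intros; rewrite id_apply; auto.
  - apply (notmin_gen h a b c d b a d c sS); try tauto. right; reflexivity.
    apply invol_sS. apply maps_sS.
  - apply (notmin_gen h a b c d c d a b (sA h)); try tauto. right; reflexivity.
    apply invol_sA. apply maps_sA.
  - apply (notmin_gen h a b c d d c b a (sT h)); try tauto. left; reflexivity.
    apply invol_sT. apply maps_sT.
Qed.

Theorem mainTheorem7 (h a b c d : Z) :
  (2 <= h)%Z ->
  in_range h a -> in_range h b -> in_range h c -> in_range h d ->
  is_ls (quad h a b c d) (IZR h) /\
  (minimal (quad h a b c d) (IZR h) <-> (cond1 h a b c d \/ cond2 h a b c d)) /\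
  ~ (cond1 h a b c d /\ cond2 h a b c d) /\
  (cond1 h a b c d ->
     exists a' b' c' d', in_range h a' /\ in_range h b' /\ in_range h c' /\
       in_range h d' /\ lattice_equiv (quad h a b c d) (quad h a' b' c' d') /\
       cond2 h a' b' c' d') /\
  (cond2 h a b c d ->
     exists a' b' c' d', in_range h a' /\ in_range h b' /\ in_range h c' /\
       in_range h d' /\ lattice_equiv (quad h a b c d) (quad h a' b' c' d') /\
       cond1 h a' b' c' d').
Proof. intros Hh Ha Hb Hc Hd. split; [apply quad_ls; auto|]. split; [|split; [|split]].
  - split.
    + intros Hm. destruct (Classical_Prop.classic (cond1 h a b c d \/ cond2 h a b c d)) as [C|C]; auto.
      exfalso. apply (neither_notmin h a b c d); auto.
    + apply cond_min; auto.
  - unfold in_range, cond1, cond2 in *. lia.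
  - intros C. exists (h-a)%Z, (h-c)%Z, (h-b)%Z, (h-d)%Z.
    unfold in_range, cond1, cond2 in *. repeat split; try lia. apply equiv_sR.
  - intros C. exists (h-a)%Z, (h-c)%Z, (h-b)%Z, (h-d)%Z.
    unfold in_range, cond1, cond2 in *. repeat split; try lia. apply equiv_sR.
Qed.
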